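(* In the one-counter game $\mathcal{G}$ defined below, $\mathrm{Verifier}$ has a strategy from the configuration $(s'_0,0)$ ensuring that every compatible play reaches the state $s'_F$ if and only if $\mathcal{T}$ accepts $w$.
   Context: Let $\mathcal{T}=(Q,q_0,\Sigma,\delta,q_F)$ be a deterministic Turing machine with tape alphabet $\Sigma=\{0,1,\#,a,r\}$ ($\#$ blank; $\mathcal{T}$ accepts immediately on reading $a$ and rejects immediately on reading $r$), transition function $\delta:Q\times\Sigma\to Q\times\Sigma\times\{\mathrm{Left},\mathrm{Right}\}$ with components $\delta_1,\delta_2,\delta_3$, and accepting state $q_F$. Let $w=w_1\dots w_{|w|}$ be an input, $n=|w|^k$, and assume $\mathcal{T}$ uses only cells $1,\dots,2^{2^n}$, with extra cells $0$ and $2^{2^n}+1$ initially holding $a$, the head initially on cell 1, and that if $\mathcal{T}$ halts accepting it does so in state $q_F$ with the head on cell 1 holding $a$. Let $\Delta=\Sigma\cup(Q\times\Sigma)$. The run of $\mathcal{T}$ on $w$ is the sequence of configurations $C^w_0C^w_1\dots$, each $C^w_i\in\Delta^{2^{2^n}+2}$ (indexed $0,\dots,2^{2^n}+1$) containing exactly one element of $Q\times\Sigma$ marking the state and head position; $C^w_0=a\,(q_0,w_1)\,w_2\dots w_{|w|}\,\#\dots\#\,a$; $C^w_i(j)$ is the $j$-th element. For $d\in\Delta$, $\mathrm{Pre}(d)$ is the set of triples: all $(d_1,d_2,d_3)\in\Sigma^3$ with $d_2=d$; all $((q,b),d_2,d_3)\in(Q\times\Sigma)\times\Sigma^2$ with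 either $d=(\delta_1(q,b),d_2)$ and $\delta_3(q,b)=\mathrm{Right}$, or $d=d_2$ and $\delta_3(q,b)\neq\mathrm{Right}$; all $(d_1,d_2,(q,b))\in\Sigma^2\times(Q\times\Sigma)$ with either $d=(\delta_1(q,b),d_2)$ and $\delta_3(q,b)=\mathrm{Left}$, or $d=d_2$ and $\delta_3(q,b)\neq\mathrm{Left}$; all $(d_1,(q,b),d_3)\in\Sigma\times(Q\times\Sigma)\times\Sigma$ with $d=\delta_2(q,b)$. The OCG $\mathcal{G}$ has players $\mathrm{Verifier},\mathrm{Falsifier}$, states $S'=(\{0,\dots,2^{2^n}+1\}\times(\Delta\cup\Delta^3))\cup\{s'_0,s'_z,s'_r,s'_F\}$, with $\mathrm{Verifier}$ controlling $(\{0,\dots,2^{2^n}+1\}\times\Delta)\cup\{s'_0\}$ and $\mathrm{Falsifier}$ the rest. Its transitions (state, weight, state) are exactly: $(s'_0,1,s'_0)$; $(s'_0,0,(1,(q_F,a)))$; $((j,d),0,(j,(d_1,d_2,d_3)))$ for $j\in\{1,\dots,2^{2^n}\}$, $(d_1,d_2,d_3)\in\mathrm{Pre}(d)$; for $j\in\{0,2^{2^n}+1\}$: $((j,a),0,s'_F)$ and $((j,d),0,s'_r)$ for $d\neq a$; $((j,d),0,s'_z)$ for all $(j,d)$ with $C^w_0(j)=d$; $(s'_z,0,s'_F)$; $(s'_z,-1,s'_r)$; and for $j\in\{1,\dots,2^{2^n}\}$ and $d_1,d_2,d_3\in\Delta$: $((j,(d_1,d_2,d_3)),-1,(j-1,d_1))$,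 $((j,(d_1,d_2,d_3)),-1,(j,d_2))$, $((j,(d_1,d_2,d_3)),-1,(j+1,d_3))$. Configurations are (state, counter value) pairs with counter in $\mathbb{N}$; a transition with weight $-1$ is disabled at counter value 0; plays are maximal sequences of configurations following enabled transitions (a play with no enabled move ends). *)

(* Defs.v *)
From mathcomp Require Import all_boot.
Set Implicit Arguments. Unset Strict Implicit. Unset Printing Implicit Defensive.

(* Tape alphabet Sigma = {0,1,#,a,r}. *)
Inductive Sig := Zero | One | Blank | SA | SR.
Inductive Dir := DLeft | DRight.

Inductive Delta (Q : Type) := DSym of Sig | DHead of Q & Sig.
Arguments DSym {Q}.

Section TM.
Variable Q : finType.
Variables (q0 qF : Q) (delta : Q -> Sig -> Q * Sig * Dir).

Definition delta1 q b := (delta q b).1.1.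
Definition delta2 q b := (delta q b).1.2.
Definition delta3 q b := (delta q b).2.

Definition ncells (w : seq Sig) (k : nat) : nat := 2 ^ (2 ^ (size w ^ k)).

(* C^w_0 = a (q0,w_1) w_2 ... w_|w| # ... # a, cells 0 .. N+1 *)
Definition init_conf (w : seq Sig) (N : nat) (j : nat) : Delta Q :=
  if j == 0 then DSym SA
  else if j == N.+1 then DSym SA
  else if j == 1 then DHead q0 (nth Blank w 0)
  else if j <= size w then DSym (nth Blank w j.-1)
  else DSym Blank.

Definition step (N : nat) (C : nat -> Delta Q) (j : nat) : Delta Q :=
  if (0 < j <= N) then
    match C j with
    | DHead q b => DSym (delta2 q b)
    | DSym s =>
        let from_right :=
          match C j.+1 with
          | DHead q b => if delta3 q b is DLeft then DHead (delta1 q b) s else DSym s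
          | DSym _ => DSym s
          end in
        match C j.-1 with
        | DHead q b => if delta3 q b is DRight then DHead (delta1 q b) s else from_right
        | DSym _ => from_right
        end
    end
  else C j.

Definition run (w : seq Sig) (N : nat) (i : nat) : nat -> Delta Q :=
  iter i (step N) (init_conf w N).

Definition accepts (w : seq Sig) (N : nat) : Prop :=
  exists i j b, run w N i j = DHead qF b.

Definition Pre (x1 x2 x3 d : Delta Q) : Prop :=
  match x1, x2, x3 with
  | DSym _, DSym s2, DSym _ => d = DSym s2
  | DHead q b, DSym s2, DSym _ =>
      (d = DHead (delta1 q b) s2 /\ delta3 q b = DRight) \/
      (d = DSym s2 /\ delta3 q b <> DRight)
  | DSym _, DSym s2, DHead q b =>
      (d = DHead (delta1 q b) s2 /\ delta3 q b = DLeft) \/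
      (d = DSym s2 /\ delta3 q b <> DLeft)
  | DSym _, DHead q b, DSym _ => d = DSym (delta2 q b)
  | _, _, _ => False
  end.

Inductive gstate :=
| GS0 | GSz | GSr | GSF
| GSingle of nat & Delta Q
| GTriple of nat & Delta Q & Delta Q & Delta Q.

Inductive weight := Wm1 | W0 | Wp1.

Inductive trans (N : nat) (C0 : nat -> Delta Q) : gstate -> weight -> gstate -> Prop :=
| t_loop : trans N C0 GS0 Wp1 GS0
| t_start : trans N C0 GS0 W0 (GSingle 1 (DHead qF SA))
| t_pre j d x1 x2 x3 : 1 <= j <= N -> Pre x1 x2 x3 d ->
    trans N C0 (GSingle j d) W0 (GTriple j x1 x2 x3)
| t_bndF j : (j = 0 \/ j = N.+1) -> trans N C0 (GSingle j (DSym SA)) W0 GSF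
| t_bndR j d : (j = 0 \/ j = N.+1) -> d <> DSym SA -> trans N C0 (GSingle j d) W0 GSr
| t_init j d : j <= N.+1 -> C0 j = d -> trans N C0 (GSingle j d) W0 GSz
| t_zF : trans N C0 GSz W0 GSF
| t_zR : trans N C0 GSz Wm1 GSr
| t_left j x1 x2 x3 : 1 <= j <= N ->
    trans N C0 (GTriple j x1 x2 x3) Wm1 (GSingle j.-1 x1)
| t_mid j x1 x2 x3 : 1 <= j <= N ->
    trans N C0 (GTriple j x1 x2 x3) Wm1 (GSingle j x2)
| t_right j x1 x2 x3 : 1 <= j <= N ->
    trans N C0 (GTriple j x1 x2 x3) Wm1 (GSingle j.+1 x3).

Definition verifier_owned (s : gstate) : bool :=
  match s with GS0 | GSingle _ _ => true | _ => false end.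

Definition cfg := (gstate * nat)%type.

Definition upd (wt : weight) (c : nat) : option nat :=
  match wt with
  | Wm1 => if c is c'.+1 then Some c' else None
  | W0 => Some c
  | Wp1 => Some c.+1
  end.

Definition move N C0 (c c' : cfg) : Prop :=
  exists wt, trans N C0 c.1 wt c'.1 /\ upd wt c.2 = Some c'.2.

Definition stuck N C0 (c : cfg) : Prop := forall c', ~ move N C0 c c'.

(* a Verifier strategy maps a history (previous configurations) and the
   current configuration to the next configuration *)
Definition strategy := seq cfg -> cfg -> cfg.

Definition legal N C0 (sigma : strategy) : Prop :=
  forall h c, verifier_owned c.1 -> ~ stuck N C0 c -> move N C0 c (sigma h c).

(* a play is pi : nat -> cfg, finite of last index n (len = Some n) or infinite *)
Definition compatible N C0 (sigma : strategy) (start : cfg)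
    (pi : nat -> cfg) (len : option nat) : Prop :=
  pi 0 = start /\
  (forall i, (if len is Some n then is_true (i < n) else True) ->
     move N C0 (pi i) (pi i.+1) /\
     (verifier_owned (pi i).1 -> pi i.+1 = sigma [seq pi k | k <- iota 0 i] (pi i))) /\
  (if len is Some n then stuck N C0 (pi n) else True).

Definition reaches (pi : nat -> cfg) (len : option nat) (s : gstate) : Prop :=
  exists i, (if len is Some n then is_true (i <= n) else True) /\ (pi i).1 = s.

Definition verifier_wins_reach N C0 (start : cfg) (target : gstate) : Prop :=
  exists sigma : strategy, legal N C0 sigma /\
    forall pi len, compatible N C0 sigma start pi len -> reaches pi len target.

End TM.

(* Main.v *)
Require Import Defs.
From mathcomp Require Import all_boot.
From Stdlib Require Import Classical ClassicalEpsilon.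
From mathcomp Require Import zify.

Set Implicit Arguments. Unset Strict Implicit. Unset Printing Implicit Defensive.

Section Proof.
Variable Q : finType.
Variables (q0 qF : Q) (delta : Q -> Sig -> Q * Sig * Dir) (w : seq Sig) (N : nat).

Local Notation R m := (run q0 delta w N m).
Local Notation C0 := (init_conf q0 w N).

Definition ishead (x : Delta Q) : bool := if x is DHead _ _ then true else false.

Definition stepval (x1 x2 x3 : Delta Q) : Delta Q :=
  match x2 with
  | DHead q b => DSym (delta2 delta q b)
  | DSym s =>
      let fr := match x3 with
        | DHead q b => if delta3 delta q b is DLeft then DHead (delta1 delta q b) s else DSym s
        | DSym _ => DSym s end in
      match x1 with
      | DHead q b => if delta3 delta q b is DRight then DHead (delta1 delta q b) s else fr
      | DSym _ => fr end
  end.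

Lemma step_val C j : 0 < j <= N -> step delta N C j = stepval (C j.-1) (C j) (C j.+1).
Proof. by move=> H; rewrite /step H. Qed.

Lemma pre_stepval x1 x2 x3 d :
  ~~ (ishead x1 && ishead x2) -> ~~ (ishead x2 && ishead x3) -> ~~ (ishead x1 && ishead x3) ->
  Pre delta x1 x2 x3 d <-> d = stepval x1 x2 x3.
Proof.
case: x1 => [s1|q1 b1]; case: x2 => [s2|q2 b2]; case: x3 => [s3|q3 b3] //= _ _ _;
  try (case E: (delta3 delta _ _)); split; intuition (try congruence).
Qed.

Definition good (C : nat -> Delta Q) :=
  (forall a, ishead (C a) -> 0 < a <= N) /\
  (forall a b, ishead (C a) -> ishead (C b) -> a = b).

Lemma good_init : 0 < N -> good C0.
Proof.
move=> HN; rewrite /good /init_conf; split.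
- move=> a; case: eqP => // _; case: eqP => // _; case: eqP => [->|_] //.
  by case: ifP.
- have H : forall a, ishead (C0 a) -> a = 1.
    move=> a; rewrite /init_conf; case: eqP => // _; case: eqP => // _;
    case: eqP => [->|_] //; by case: ifP.
  by move=> a b /H -> /H ->.
Qed.

Lemma head_step C a : good C -> ishead (step delta N C a) ->
  0 < a <= N /\ ((exists q b, C a.-1 = DHead q b /\ delta3 delta q b = DRight) \/
                 (exists q b, C a.+1 = DHead q b /\ delta3 delta q b = DLeft)).
Proof.
move=> [Hb Hu]; rewrite /step; case: ifP => Ha; last by move/Hb; rewrite Ha.
split=> //; move: H; case E1: (C a.-1) => [s1|q1 b1]; case E2: (C a) => [s2|q2 b2];
  case E3: (C a.+1) => [s3|q3 b3] //=; try (case E: (delta3 delta q1 b1));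
  try (case E': (delta3 delta q3 b3)) => //= _; eauto 6; by [].
Qed.

Lemma good_step C : good C -> good (step delta N C).
Proof.
move=> G; split.
- by move=> a /(head_step G) [].
- move: G => [Hb Hu] a b Ha Hb'.
  have G : good C by [].
  case: (head_step G Ha) => /andP [a0 _] [[q [c [E1 D1]]]|[q [c [E1 D1]]]];
  case: (head_step G Hb') => /andP [b0 _] [[q' [c' [E2 D2]]]|[q' [c' [E2 D2]]]].
  + have: a.-1 = b.-1 by apply: Hu; rewrite ?E1 ?E2.
    lia.
  + have E: a.-1 = b.+1 by apply: Hu; rewrite ?E1 ?E2.
    by move: E2; rewrite -E E1 => -[Eq Ec]; subst q' c'; rewrite D1 in D2.
  + have E: a.+1 = b.-1 by apply: Hu; rewrite ?E1 ?E2.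
    by move: E2; rewrite -E E1 => -[Eq Ec]; subst q' c'; rewrite D1 in D2.
  + have E: a.+1 = b.+1 by apply: Hu; rewrite ?E1 ?E2.
    lia.
Qed.

Lemma runS m : R m.+1 = step delta N (R m).
Proof. by []. Qed.

Lemma run_good m : 0 < N -> good (R m).
Proof. move=> HN; elim: m => [|m IH]; first exact: good_init. by rewrite runS; apply: good_step. Qed.

Lemma run_bnd m j : (j = 0 \/ j = N.+1) -> R m j = DSym SA.
Proof.
move=> Hj; elim: m => [|m IH].
- rewrite /run /= /init_conf; case: Hj => ->; first by [].
  by rewrite eqxx.
- rewrite runS /step; case: Hj IH => -> IH; first by [].
  by rewrite ltnn andbF.
Qed.

Lemma pre_run m j d : 0 < N -> 0 < j <= N ->
  Pre delta (R m j.-1) (R m j) (R m j.+1) d <-> d = R m.+1 j.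
Proof.
move=> HN Hj; rewrite runS step_val //.
have [_ Hu] := run_good m HN.
have j0 : 0 < j by case/andP: Hj.
apply: pre_stepval; apply/negP => /andP [h1 h2]; have := Hu _ _ h1 h2;
  lia.
Qed.


Local Notation mv := (move qF delta N C0).
Local Notation stk := (stuck qF delta N C0).

Definition gm (i0 : nat) (c : cfg Q) : cfg Q :=
  let: (s, m) := c in
  match s with
  | GS0 => if m < i0 then (GS0 Q, m.+1) else (GSingle 1 (DHead qF SA), m)
  | GSingle j d => if m is m'.+1 then
       (if (j == 0) || (j == N.+1) then (GSF Q, m)
        else (GTriple j (R m' j.-1) (R m' j) (R m' j.+1), m))
       else (GSz Q, 0)
  | _ => c
  end.

Definition W (i0 : nat) (c : cfg Q) : Prop :=
  let: (s, m) := c in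
  match s with
  | GS0 => m <= i0
  | GSingle j d => j <= N.+1 /\ d = R m j
  | GTriple j x1 x2 x3 => 0 < j <= N /\ exists m', m = m'.+1 /\
        x1 = R m' j.-1 /\ x2 = R m' j /\ x3 = R m' j.+1
  | GSz => m = 0
  | GSF => True
  | GSr => False
  end.

Definition mu (i0 : nat) (c : cfg Q) : nat :=
  let: (s, m) := c in
  match s with
  | GS0 => 3 * i0 + 4 + (i0 - m)
  | GSingle _ _ => 2 * m + 2
  | GTriple _ _ _ _ => 2 * m + 1
  | GSz => 1
  | _ => 0
  end.

Lemma W_vmove i0 c : 0 < N -> R i0 1 = DHead qF SA -> W i0 c -> verifier_owned c.1 ->
  mv c (gm i0 c) /\ W i0 (gm i0 c) /\ mu i0 (gm i0 c) < mu i0 c.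
Proof.
move=> HN Hacc; case: c => s m; case: s => //=.
- move=> Hm _; case: ifP => Hlt.
  + split; first by exists Wp1; split=> //; constructor.
    split=> //=; lia.
  + have Em : m = i0 by lia.
    subst m; split; first by exists W0; split=> //; constructor.
    split=> //=; lia.
- move=> j d [Hj ->] _; case: m => [|m].
  + split; first by exists W0; split=> //; constructor.
    by split.
  + case: ifP => Hb.
    * split; last by split=> //=; lia.
      exists W0; split=> //; rewrite run_bnd; first by constructor; case/orP: Hb => /eqP; auto.
      by case/orP: Hb => /eqP; auto.
    * have Hj' : 0 < j <= N by move: Hb Hj; case: j => [|j] //=; rewrite eqSS; lia.
      split; last by split=> //=; [split=> //; exists m | lia].
      exists W0; split=> //; constructor; first by [].
      by apply/pre_run.
Qed.

Lemma W_fmove i0 c c' : W i0 c -> ~~ verifier_owned c.1 -> mv c c' ->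
  W i0 c' /\ mu i0 c' < mu i0 c.
Proof.
case: c => s m; case: c' => s' m' /=; move=> HW Hv [wt [Ht Hu]]; simpl in *.
inversion Ht; subst; simpl in *; try discriminate.
- by [].
- by subst m.
all: move: HW => [Hj [m0 [Em [E1 [E2 E3]]]]]; subst m; case: Hu => <-.
all: split; [split; [lia| by []] | lia].
Qed.

Lemma W_stuck i0 c : 0 < N -> W i0 c -> stk c -> c.1 = GSF Q.
Proof.
move=> HN; case: c => s m; case: s => [||||j d|j x1 x2 x3] //= HW Hst; exfalso.
- by apply: (Hst (GS0 Q, m.+1)); exists Wp1; split=> //; constructor.
- subst m. by apply: (Hst (GSF Q, 0)); exists W0; split=> //; constructor.
- case: HW => Hj Ed; subst d; case: m Hst => [|m] Hst.
  + by apply: (Hst (GSz Q, 0)); exists W0; split=> //; constructor.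
  + case Hb: ((j == 0) || (j == N.+1)).
    * apply: (Hst (GSF Q, m.+1)); exists W0; split=> //.
      have Hb' : j = 0 \/ j = N.+1 by case/orP: Hb => /eqP; auto.
      by rewrite run_bnd //; constructor.
    * have Hj' : 0 < j <= N by move: Hb Hj => /norP [/eqP ? /eqP ?] ?; lia.
      apply: (Hst (GTriple j (R m j.-1) (R m j) (R m j.+1), m.+1)); exists W0; split=> //.
      by constructor=> //; apply/pre_run.
- case: HW => Hj [m' [Em _]]; subst m.
  by apply: (Hst (GSingle j x2, m')); exists Wm1; split=> //; constructor.
Qed.

Definition within (len : option nat) (i : nat) : Prop :=
  if len is Some n then is_true (i <= n) else True.

Definition sigA (i0 : nat) : strategy Q := fun h c =>
  if excluded_middle_informative (mv c (gm i0 c)) then gm i0 c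
  else match excluded_middle_informative (exists c', mv c c') with
       | left e => proj1_sig (constructive_indefinite_description _ e)
       | right _ => c end.

Lemma sigA_legal i0 : legal qF delta N C0 (sigA i0).
Proof.
move=> h c _ Hns; rewrite /sigA.
destruct (excluded_middle_informative (mv c (gm i0 c))) as [H|H]; first done.
destruct (excluded_middle_informative (exists c', mv c c')) as [e|ne].
- exact: proj2_sig (constructive_indefinite_description _ e).
- by exfalso; apply: Hns => c' Hm; apply: ne; exists c'.
Qed.

Lemma sigA_eq i0 h c : mv c (gm i0 c) -> sigA i0 h c = gm i0 c.
Proof. by move=> H; rewrite /sigA; destruct (excluded_middle_informative (mv c (gm i0 c))). Qed.

Lemma dirA i0 : 0 < N -> R i0 1 = DHead qF SA ->
  verifier_wins_reach qF delta N C0 (GS0 Q, 0) (GSF Q).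
Proof.
move=> HN Hacc; exists (sigA i0); split; first exact: sigA_legal.
move=> pi len [H0 [Hmv Hst]].
have Inv : forall i, within len i ->
    W i0 (pi i) /\ mu i0 (pi i) + i <= mu i0 (pi 0).
  elim=> [|i IH] Hi.
  - by rewrite H0 /=; split=> //; lia.
  - have Hi'' : within len i.
      by case: len Hmv Hst Hi {IH} => //= n _ _; apply: ltnW.
    case: (IH Hi'') => HW Hmu.
    case: (Hmv i); first by case: len Hmv Hst Hi {IH Hi''}.
    move=> Hm Hc.
    case Hvo: (verifier_owned (pi i).1).
    + rewrite Hc // sigA_eq; last by case: (W_vmove HN Hacc HW Hvo).
      case: (W_vmove HN Hacc HW Hvo) => _ [HW' Hlt]; split=> //; lia.
    + case: (W_fmove HW (negbT Hvo) Hm) => HW' Hlt; split=> //; lia.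
case: len Hmv Hst Inv => [n|] Hmv Hst Inv.
- case: (Inv n (leqnn n)) => HW _.
  by exists n; split=> //; apply: (W_stuck HN HW).
- by case: (Inv (mu i0 (pi 0)).+1 I) => _; lia.
Qed.

Definition deq (x y : Delta Q) : {x = y} + {x <> y}.
Proof. decide equality; try (decide equality); try (apply: eq_comparable). Defined.

Definition Iv (c : cfg Q) : Prop :=
  let: (s, m) := c in
  match s with
  | GS0 => True
  | GSingle j d => j <= N.+1 /\ d <> R m j
  | GTriple j x1 x2 x3 => 0 < j <= N /\ (m = 0 \/ exists m', m = m'.+1 /\
        ~ (x1 = R m' j.-1 /\ x2 = R m' j /\ x3 = R m' j.+1))
  | GSz => 0 < m
  | GSF => False
  | GSr => True
  end.

Definition fal (c : cfg Q) : cfg Q :=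
  match c with
  | (GTriple j x1 x2 x3, m'.+1) =>
      if deq x1 (R m' j.-1) then
        (if deq x2 (R m' j) then (GSingle j.+1 x3, m') else (GSingle j x2, m'))
      else (GSingle j.-1 x1, m')
  | (GSz, m'.+1) => (GSr Q, m')
  | _ => c
  end.

Lemma I_fal c : Iv c -> ~~ verifier_owned c.1 -> ~ stk c -> mv c (fal c) /\ Iv (fal c).
Proof.
case: c => s m; case: s => [||||j d|j x1 x2 x3] //= HI _ Hns.
- case: m HI Hns => // m _ _; split=> //; exists Wm1; split=> //; constructor.
- exfalso; apply: Hns => c' [wt [Ht _]]; inversion Ht.
- case: HI => Hj [Em|[m' [Em Hne]]].
  + subst m; exfalso; apply: Hns => c' [wt [Ht Hu]]; inversion Ht; subst; discriminate.
  + subst m; case: (deq x1 (R m' j.-1)) => E1.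
    * case: (deq x2 (R m' j)) => E2.
      -- split; first by exists Wm1; split=> //; constructor.
         split; first lia. by move=> E3; apply: Hne.
      -- split; first by exists Wm1; split=> //; constructor.
         split; first lia. by [].
    * split; first by exists Wm1; split=> //; constructor.
      split; first lia. by [].
Qed.

Lemma I_vmove c c' : 0 < N -> (forall m, R m 1 <> DHead qF SA) ->
  Iv c -> verifier_owned c.1 -> mv c c' -> Iv c'.
Proof.
move=> HN Hna; case: c => s m; case: c' => s' m' /= HI Hv [wt [Ht Hu]]; simpl in *.
inversion Ht; subst; simpl in *; try discriminate; try (case: Hu => Hu; subst).
- by [].
- by split=> // E; apply: (Hna m'); rewrite -E.
- case: HI => Hj Hd; split=> //; case: m' Hd => [|m'] Hd; first by left.
  right; exists m'; split=> //; move=> [E1 [E2 E3]]; apply: Hd.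
  by apply/(pre_run m' d HN H); rewrite -E1 -E2 -E3.
- by case: HI => _; rewrite run_bnd.
- by [].
- case: HI => _ Hd; case: m' Hd => // Hd; exfalso; apply: Hd; by [].
Qed.

Fixpoint play (sg : strategy Q) (n : nat) : seq (cfg Q) * cfg Q :=
  match n with
  | 0 => ([::], (GS0 Q, 0))
  | n'.+1 => let: (h, c) := play sg n' in
             (rcons h c, if verifier_owned c.1 then sg h c else fal c)
  end.

Lemma play_S sg n : play sg n.+1 =
  (rcons (play sg n).1 (play sg n).2,
   if verifier_owned (play sg n).2.1 then sg (play sg n).1 (play sg n).2
   else fal (play sg n).2).
Proof. by rewrite /=; case: (play sg n). Qed.

Lemma play_hist sg n : (play sg n).1 = mkseq (fun i => (play sg i).2) n.
Proof. elim: n => [|n IH] //; by rewrite play_S mkseqS /= IH. Qed.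

Lemma min_ex (P : nat -> Prop) : (exists n, P n) -> exists n, P n /\ forall m, m < n -> ~ P m.
Proof.
move=> [n Pn]; elim/ltn_ind: n Pn => n IH Pn.
case: (classic (exists m, m < n /\ P m)) => [[m [lt Pm]]|H]; first exact: IH m lt Pm.
by exists n; split=> // m lt Pm; apply: H; exists m.
Qed.

Lemma dirB : 0 < N -> verifier_wins_reach qF delta N C0 (GS0 Q, 0) (GSF Q) ->
  exists m, R m 1 = DHead qF SA.
Proof.
move=> HN [sg [Hleg Hwin]].
apply: NNPP => Hna'.
have Hna : forall m, R m 1 <> DHead qF SA by move=> m E; apply: Hna'; exists m.
pose pi i := (play sg i).2.
have piS : forall i, pi i.+1 = if verifier_owned (pi i).1
      then sg [seq pi k | k <- iota 0 i] (pi i) else fal (pi i).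
  by move=> i; rewrite /pi play_S /= play_hist.
have Iinv : forall i, (forall k, k < i -> ~ stk (pi k)) -> Iv (pi i).
  elim=> [|i IH] Hk; first by [].
  have HI := IH (fun k lt => Hk k (ltnW lt)).
  have Hns := Hk i (ltnSn i).
  rewrite piS; case Hvo: (verifier_owned (pi i).1).
  - by apply: (I_vmove HN Hna HI Hvo); apply: Hleg.
  - by case: (I_fal HI (negbT Hvo) Hns).
have Hmove : forall i, (forall k, k <= i -> ~ stk (pi k)) ->
    mv (pi i) (pi i.+1) /\ (verifier_owned (pi i).1 ->
      pi i.+1 = sg [seq pi k | k <- iota 0 i] (pi i)).
  move=> i Hk; have Hns := Hk i (leqnn i).
  have HI : Iv (pi i) by apply: Iinv => k lt; apply: Hk; apply: ltnW.
  rewrite piS; case Hvo: (verifier_owned (pi i).1); split=> //.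
  - by apply: Hleg.
  - by case: (I_fal HI (negbT Hvo) Hns).
case: (classic (exists n, stk (pi n))) => [Hex|Hnex].
- case: (min_ex Hex) => n [Hsn Hmin].
  have [i [Hi Hs]] := Hwin pi (Some n) (conj (erefl _) (conj (fun i (Hi : i < n) =>
     Hmove i (fun k Hk => Hmin k (leq_ltn_trans Hk Hi))) Hsn)).
  have := Iinv i (fun k Hk => Hmin k (leq_trans Hk Hi)).
  by case: (pi i) Hs => s m /= ->.
- have [i [_ Hs]] := Hwin pi None (conj (erefl _) (conj (fun i _ =>
     Hmove i (fun k _ Hs => Hnex (ex_intro _ k Hs))) I)).
  have := Iinv i (fun k _ Hs => Hnex (ex_intro _ k Hs)).
  by case: (pi i) Hs => s m /= ->.
Qed.

End Proof.

Theorem mainTheorem7 (Q : finType) (q0 qF : Q) (delta : Q -> Sig -> Q * Sig * Dir)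
  (w : seq Sig) (k : nat) :
  (forall i, i < size w -> nth Blank w i = Zero \/ nth Blank w i = One) ->
  0 < size w -> size w <= ncells w k ->
  (* T uses only cells 1 .. 2^(2^n) *)
  (forall i, exists j q b, 1 <= j <= ncells w k /\
       run q0 delta w (ncells w k) i j = DHead q b) ->
  (* if T accepts, it is in q_F with the head on cell 1 holding a *)
  (forall i j b, run q0 delta w (ncells w k) i j = DHead qF b -> j = 1 /\ b = SA) ->
  (verifier_wins_reach qF delta (ncells w k) (init_conf q0 w (ncells w k))
       (GS0 Q, 0) (GSF Q)
   <-> accepts q0 qF delta w (ncells w k)).
Proof.
move=> _ _ _ _ Hacc.
have HN : 0 < ncells w k by rewrite /ncells expn_gt0.
split.
- move=> Hw; have [m Hm] := dirB HN Hw; by exists m, 1, SA.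
- move=> [i [j [b Hr]]]; have [Ej Eb] := Hacc _ _ _ Hr; subst j b.
  exact: (dirA HN Hr).
Qed.
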